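(* Let $\mathcal{D}=\{X_i:i\in I\}$ be a set of random variables on $\Omega$ containing all constant functions, and let $Q$ be a coherent$_1$ marginal prevision on $\mathcal{D}$. Let $\mathcal{L}$ be the set of all random variables $Y$ that can be written as $Y=\sum_{j=1}^n\alpha_jX_{i_j}$ with $X_{i_j}\in\mathcal{D}$, real $\alpha_j$, such that $p_Y=\sum_{j=1}^n\alpha_jQ(X_{i_j})$ is well defined. Then setting $P(Y)=p_Y$ for $Y\in\mathcal{L}$ is well defined (independent of the chosen representation of $Y$), and $P$ is the unique coherent$_1$ extension of $Q$ to $\mathcal{L}$.
   Context: Random variables are real-valued functions on a nonempty set $\Omega$; marginal previsions are extended real numbers. A sum of extended reals is well defined if it does not involve both $+\infty$ and $-\infty$ terms; the convention $0\times(\pm\infty)=0$ is used. Coherence$_1$ (marginal case): $\{P(X_i):i\in I\}$ is coherent$_1$ if for every finite $\{i_1,\dots,i_n\}\subseteq I$, all real $\alpha_1,\dots,\alpha_n$ with $\alpha_j\ge0$ whenever $P(X_{i_j})=+\infty$ and $\alpha_j\le0$ whenever $P(X_{i_j})=-\infty$, and all real $c_1,\dots,c_n$ with $c_j=P(X_{i_j})$ whenever it is finite, $\sup_\omega\sum_{j=1}^n\alpha_j[X_{i_j}(\omega)-c_j]\ge0$. *)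

(* Defs.v *)
From HB Require Import structures.
From mathcomp Require Import all_boot all_order all_algebra.
From mathcomp Require Import all_classical all_reals ereal.
Set Implicit Arguments. Unset Strict Implicit. Unset Printing Implicit Defensive.
Import Order.TTheory GRing.Theory Num.Theory.
Local Open Scope classical_set_scope.
Local Open Scope ring_scope.

Section Defs.
Variables (R : realType) (Omega : Type).
Notation RV := (Omega -> R).

Definition wd_sum (n : nat) (t : 'I_n -> \bar R) : Prop :=
  ~ ((exists j, t j = +oo%E) /\ (exists j, t j = -oo%E)).

Definition coherent1 (D : set RV) (P : RV -> \bar R) : Prop :=
  forall (n : nat) (x : 'I_n -> RV) (a c : 'I_n -> R),
    injective x -> (forall j, D (x j)) ->
    (forall j, P (x j) = +oo%E -> 0 <= a j) ->
    (forall j, P (x j) = -oo%E -> a j <= 0) ->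
    (forall j, P (x j) \is a fin_num -> P (x j) = (c j)%:E) ->
    (0 <= ereal_sup (range (fun w : Omega =>
                         (\sum_(j < n) a j * (x j w - c j))%:E)))%E.

(* (n, x, a) is a representation of Y = sum_j a_j x_j with x_j in D such that
   p_Y = sum_j a_j Q(x_j) is well defined (with 0 * (+-oo) = 0). *)
Definition lin_rep (D : set RV) (Q : RV -> \bar R) (n : nat)
    (x : 'I_n -> RV) (a : 'I_n -> R) (Y : RV) : Prop :=
  [/\ forall j, D (x j),
      Y = (fun w => \sum_(j < n) a j * x j w)
    & wd_sum (fun j => ((a j)%:E * Q (x j))%E)].

Definition rep_val (Q : RV -> \bar R) (n : nat) (x : 'I_n -> RV)
    (a : 'I_n -> R) : \bar R :=
  (\sum_(j < n) ((a j)%:E * Q (x j)))%E.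

Definition linL (D : set RV) (Q : RV -> \bar R) : set RV :=
  fun Y => exists n x a, @lin_rep D Q n x a Y.

End Defs.

(* Main.v *)
Require Import Defs.
From HB Require Import structures.
From mathcomp Require Import all_boot all_order all_algebra.
From mathcomp Require Import all_classical all_reals ereal.
From mathcomp Require Import lra.
Import Order.TTheory GRing.Theory Num.Theory.
Local Open Scope classical_set_scope.
Local Open Scope ring_scope.

Section Aux.
Variable R : realType.
Local Open Scope ereal_scope.

Lemma E1 (a : R) (e : \bar R) : a%:E * e \is a fin_num -> e \isn't a fin_num -> a = 0%R.
Proof.
case: e => [r||] //= h _; apply/eqP; move: h.
  by rewrite mulry; case: sgrP => // _; rewrite ?mul1e ?mulN1e.
by rewrite mulrNy; case: sgrP => // _; rewrite ?mul1e ?mulN1e.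
Qed.

Lemma E2 (a : R) : a%:E * +oo != -oo -> (0 <= a)%R.
Proof. apply: contraNT; rewrite -ltNge => h; by rewrite mulry ltr0_sg // mulN1e. Qed.
Lemma E3 (a : R) : a%:E * -oo != -oo -> (a <= 0)%R.
Proof. apply: contraNT; rewrite -ltNge => h; by rewrite mulrNy gtr0_sg // mul1e. Qed.
Lemma E4 (a : R) : a%:E * +oo != +oo -> (a <= 0)%R.
Proof. apply: contraNT; rewrite -ltNge => h; by rewrite mulry gtr0_sg // mul1e. Qed.
Lemma E5 (a : R) : a%:E * -oo != +oo -> (0 <= a)%R.
Proof. apply: contraNT; rewrite -ltNge => h; by rewrite mulrNy ltr0_sg // mulN1e. Qed.

Lemma sumNy (I : finType) (f : I -> \bar R) : \sum_i f i != -oo -> forall i, f i != -oo.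
Proof.
move=> h i; apply: contra h => /eqP fi; apply/eqP/esum_eqNyP.
by exists i; rewrite mem_index_enum fi.
Qed.

Lemma sumy (n : nat) (f : 'I_n -> \bar R) : wd_sum f -> \sum_i f i != +oo -> forall i, f i != +oo.
Proof.
move=> wd h i; apply: contra h => /eqP fi.
have nNy : forall j, true -> f j != -oo.
  by move=> j _; apply/eqP => fj; apply: wd; split; [exists i|exists j].
by apply/eqP/(esum_eqyP _ nNy); exists i; rewrite mem_index_enum fi.
Qed.

End Aux.

Section GS.
Variables (R : realType) (Omega : Type).
Notation RV := (Omega -> R).
Variables (S : set RV) (P : RV -> \bar R).
Hypotheses (HO : inhabited Omega) (HC : forall c : R, S (fun _ => c)) (HS : coherent1 S P).

Lemma G (T : finType) (x : T -> RV) (a c : T -> R) :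
  (forall t, S (x t)) ->
  (forall t, P (x t) = +oo%E -> 0 <= a t) ->
  (forall t, P (x t) = -oo%E -> a t <= 0) ->
  (forall t, P (x t) \is a fin_num -> P (x t) = (c t)%:E) ->
  (0 <= ereal_sup (range (fun w => (\sum_t a t * (x t w - c t))%:E)))%E.
Proof.
move=> Sx Hp Hn Hf.
case: HO => w0.
pose first t := forall u, (enum_rank u < enum_rank t)%N -> x u <> x t.
have uniq1 : forall t t', first t -> first t' -> x t = x t' -> t = t'.
  move=> t t' ft ft' e.
  case: (ltngtP (enum_rank t) (enum_rank t')) => h.
  - by case: (ft' t h e).
  - by case: (ft t' h (esym e)).
  - by apply/enum_rank_inj/val_inj.
have exrep : forall u, exists t, first t /\ x t = x u.
  suff H : forall k u, (enum_rank u < k)%N -> exists t, first t /\ x t = x u.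
    by move=> u; apply: (H (enum_rank u).+1).
  elim=> [//|k IH] u hu.
  case: (pselect (first u)) => fu; first by exists u.
  move/existsNP: fu => [v /not_implyP [hv /contrapT xv]].
  have [t [ft xt]] := IH v (leq_trans hv hu).
  by exists t; split => //; rewrite xt.
have [rep Hrep] := choice exrep.
have xrep u : x (rep u) = x u by case: (Hrep u).
have repE u v : x u = x v -> rep u = rep v.
  move=> e; apply: uniq1; [by case: (Hrep u)|by case: (Hrep v)|].
  by rewrite !xrep.
have reprep u : rep (rep u) = rep u by apply: repE; rewrite xrep.
have xu t u : rep u = t -> x u = x t by move=> <-; rewrite xrep.
pose M := 1 + \sum_t `|x t w0|.
have bnd t (k : nat) : x t w0 < M + k%:R.
  rewrite /M (bigD1 t) //=.
  have := ler_norm (x t w0).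
  have : 0 <= \sum_(i | i != t) `|x i w0| by apply: sumr_ge0 => i _.
  have := ler0n R k.
  lra.
pose x' t := if rep t == t then x t else (fun _ => M + (enum_rank t)%:R).
pose A t := \sum_(u | rep u == t) a u.
pose a' t := if rep t == t then A t else 0.
pose c' t := if P (x' t) \is a fin_num then fine (P (x' t))
             else (\sum_(u | rep u == t) a u * c u) / A t.
have key w : \sum_t a t * (x t w - c t) = \sum_t a' t * (x' t w - c' t).
  rewrite (partition_big rep (fun t => rep t == t)) => [|u _]; last by rewrite reprep.
  rewrite [RHS](bigID (fun t => rep t == t)) /=.
  rewrite [X in _ = _ + X]big1 ?addr0 => [|t /negbTE h]; last by rewrite /a' h mul0r.
  apply: eq_bigr => t /eqP rt.
  rewrite /c' /a' /x' rt eqxx.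
  rewrite (eq_bigr (fun u => a u * x t w - a u * c u)) => [|u /= /eqP ru]; last first.
    by rewrite (xu t u ru) mulrBr.
  rewrite sumrB -mulr_suml -/(A t).
  case: ifP => fin.
    have -> : \sum_(u | rep u == t) a u * c u = A t * fine (P (x t)).
      rewrite /A mulr_suml; apply: eq_bigr => u /eqP ru.
      have := Hf u; rewrite (xu t u ru) => /(_ fin) ->; done.
    by rewrite mulrBr.
  case: (eqVneq (A t) 0) => A0; last by rewrite mulrBr mulrCA divff // mulr1.
  have a0 : forall u, rep u == t -> a u = 0.
    move: fin; case E: (P (x t)) => [r||] // _.
      apply: psumr_eq0P => // u /eqP ru; apply: Hp; by rewrite (xu t u ru).
    move=> u ru; apply/eqP; rewrite -oppr_eq0; apply/eqP; move: u ru.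
    apply: psumr_eq0P; last by rewrite sumrN -/(A t) A0 oppr0.
    move=> u /eqP ru; rewrite oppr_ge0; apply: Hn; by rewrite (xu t u ru).
  rewrite big1 => [|u /a0 ->]; last by rewrite mul0r.
  by rewrite mul0r !subr0.
have Sx' t : S (x' t) by rewrite /x'; case: ifP => _; [exact: Sx|exact: HC].
have Hp' t : P (x' t) = +oo%E -> 0 <= a' t.
  rewrite /a' /x'; case: ifP => [/eqP rt|_ _]; last done.
  move=> Pt; apply: sumr_ge0 => u /eqP ru; apply: Hp; by rewrite (xu t u ru).
have Hn' t : P (x' t) = -oo%E -> a' t <= 0.
  rewrite /a' /x'; case: ifP => [/eqP rt|_ _]; last done.
  move=> Pt; apply: sumr_le0 => u /eqP ru; apply: Hn; by rewrite (xu t u ru).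
have Hf' t : P (x' t) \is a fin_num -> P (x' t) = (c' t)%:E.
  by move=> fin; rewrite /c' fin fineK.
have inj' : injective x'.
  move=> t1 t2; rewrite /x'.
  case: (eqVneq (rep t1) t1) => r1; case: (eqVneq (rep t2) t2) => r2 e.
  - by rewrite -r1 -r2; apply: repE.
  - have := congr1 (fun f => f w0) e => /= h.
    by have := bnd t1 (enum_rank t2); rewrite h ltxx.
  - have := congr1 (fun f => f w0) e => /= h.
    by have := bnd t2 (enum_rank t1); rewrite -h ltxx.
  - have := congr1 (fun f => f w0) e => /= /addrI /eqP.
    by rewrite eqr_nat => /eqP /val_inj /enum_rank_inj.
have := HS #|T| (fun i => x' (enum_val i)) (fun i => a' (enum_val i)) (fun i => c' (enum_val i))
  (fun i j e => enum_val_inj (inj' _ _ e)) (fun i => Sx' _) (fun i => Hp' _) (fun i => Hn' _) (fun i => Hf' _).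
suff -> : (fun w => (\sum_t a t * (x t w - c t))%:E) =
  (fun w => (\sum_(i < #|T|) a' (enum_val i) * (x' (enum_val i) w - c' (enum_val i)))%:E) by [].
apply: funext => w; rewrite key; congr EFin.
symmetry; rewrite -(big_enum_val (fun t => a' t * (x' t w - c' t))); apply: eq_bigl => t; by rewrite inE.
Qed.


Lemma L (T : finType) (x : T -> RV) (al : T -> R) (k : R) :
  (forall t, S (x t)) ->
  (forall t, P (x t) = +oo%E -> 0 <= al t) ->
  (forall t, P (x t) = -oo%E -> al t <= 0) ->
  (forall w, \sum_t al t * x t w <= k) ->
  (forall t, ((al t)%:E * P (x t))%E \is a fin_num) /\
  \sum_t fine ((al t)%:E * P (x t))%E <= k.
Proof.
move=> Sx Hp Hn Hk.
have key : forall c : T -> R, (forall t, P (x t) \is a fin_num -> P (x t) = (c t)%:E) ->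
    \sum_t al t * c t <= k.
  move=> c Hc; have := @G T x al c Sx Hp Hn Hc.
  have ub : (ereal_sup (range (fun w => (\sum_t al t * (x t w - c t))%:E))
            <= (k - \sum_t al t * c t)%:E)%E.
    apply: ge_ereal_sup => _ [w _ <-]; rewrite lee_fin.
    under eq_bigr do rewrite mulrBr.
    rewrite sumrB; have := Hk w; lra.
  move=> h; have := le_trans h ub; rewrite lee_fin subr_ge0; done.
pose c0 t := if P (x t) \is a fin_num then fine (P (x t)) else 0.
have Hc0 t : P (x t) \is a fin_num -> P (x t) = (c0 t)%:E.
  by rewrite /c0 => f; rewrite f fineK.
have fin : forall t, ((al t)%:E * P (x t))%E \is a fin_num.
  move=> t0; apply/negPn/negP => nf.
  have nP : P (x t0) \isn't a fin_num.
    by apply: contra nf => f; apply: fin_numM.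
  have al0 : al t0 != 0.
    by apply: contra nf => /eqP ->; rewrite mul0e.
  pose B := \sum_(t | t != t0) al t * c0 t.
  pose c t := if t == t0 then (k - B + 1) / al t0 else c0 t.
  have := key c.
  have Hc : forall t, P (x t) \is a fin_num -> P (x t) = (c t)%:E.
    move=> t f; rewrite /c; case: eqP => [e|_]; last exact: Hc0.
    by move: nP; rewrite -e f.
  move=> /(_ Hc).
  rewrite (bigD1 t0) //= /c eqxx mulrCA divff // mulr1.
  rewrite (eq_bigr (fun t => al t * c0 t)) => [|t /negbTE ->] //.
  rewrite -/B; lra.
split => //.
rewrite (eq_bigr (fun t => al t * c0 t)); first exact: key.
move=> t _; rewrite /c0; case: ifP => f.
  by move: f; case: (P (x t)) => // r _; rewrite -EFinM.
by have -> := @E1 _ _ _ (fin t) (negbT f); rewrite mul0e mul0r.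
Qed.


Lemma half (n m : nat) (x : 'I_n -> RV) (a : 'I_n -> R) (y : 'I_m -> RV) (b : 'I_m -> R)
    (Y : RV) :
  lin_rep S P x a Y -> lin_rep S P y b Y -> (rep_val P x a <= rep_val P y b)%E.
Proof.
move=> [Sx Yx wdx] [Sy Yy wdy].
rewrite /rep_val.
case: (eqVneq (\sum_j (a j)%:E * P (x j))%E -oo%E) => [->|h1]; first exact: leNye.
case: (eqVneq (\sum_k (b k)%:E * P (y k))%E +oo%E) => [->|h2]; first exact: leey.
have nx := @sumNy _ _ _ h1.
have ny := @sumy _ _ _ wdy h2.
pose T := ('I_n + 'I_m)%type.
pose z (t : T) := match t with inl j => x j | inr k => y k end.
pose al (t : T) := match t with inl j => a j | inr k => - b k end.
have h1' : forall t, S (z t) by case=> [j|k] /=.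
have h2' : forall t, P (z t) = +oo%E -> 0 <= al t.
  case=> [j|k] /= hz.
    by move: (nx j); rewrite hz => /E2.
  by rewrite oppr_ge0; move: (ny k); rewrite hz => /E4.
have h3' : forall t, P (z t) = -oo%E -> al t <= 0.
  case=> [j|k] /= hz.
    by move: (nx j); rewrite hz => /E3.
  by rewrite oppr_le0; move: (ny k); rewrite hz => /E5.
have h4' : forall w, \sum_t al t * z t w <= 0.
  move=> w; rewrite big_sumType /=.
  have e1 := congr1 (fun f => f w) Yx; have e2 := congr1 (fun f => f w) Yy.
  simpl in e1, e2.
  under [X in _ + X]eq_bigr do rewrite mulNr.
  by rewrite sumrN -e1 -e2 subrr.
have [fin le] := @L T z al 0 h1' h2' h3' h4'.
have finy : forall k, ((b k)%:E * P (y k))%E \is a fin_num.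
  by move=> k; have := fin (inr k); rewrite /= EFinN mulNe fin_numN.
rewrite -[X in (X <= _)%E]EFin_sum_fine; last by move=> j _; exact: (fin (inl j)).
rewrite -EFin_sum_fine; last by move=> k _; exact: finy.
rewrite lee_fin; move: le; rewrite big_sumType /=.
under [X in _ + X <= _]eq_bigr do rewrite EFinN mulNe fineN.
rewrite sumrN; lra.
Qed.

End GS.

Section Extra.
Variables (R : realType) (Omega : Type).
Notation RV := (Omega -> R).

Lemma rep1 (S : set RV) (P : RV -> \bar R) X : S X ->
  lin_rep S P (fun _ : 'I_1 => X) (fun _ => 1) X.
Proof.
move=> SX; split => //.
  by apply: funext => w; rewrite big_ord1 mul1r.
by move=> [[j hj] [k hk]]; rewrite hj in hk.
Qed.

Lemma rep_val1 (P : RV -> \bar R) X : rep_val P (fun _ : 'I_1 => X) (fun _ => 1) = P X.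
Proof. by rewrite /rep_val big_ord1 mul1e. Qed.

Lemma sigsum (N : nat) (nn : 'I_N -> nat) (F : forall i, 'I_(nn i) -> R) :
  \sum_(p : {i : 'I_N & 'I_(nn i)}) F (tag p) (tagged p) = \sum_i \sum_(j < nn i) F i j.
Proof.
by rewrite (sig_big_dep (J := fun i => 'I_(nn i)) xpredT (fun _ _ => true) F).
Qed.

End Extra.

Theorem lemma5p3 (R : realType) (Omega : Type) (HOmega : inhabited Omega)
    (D : set (Omega -> R)) (Q : (Omega -> R) -> \bar R)
    (Hconst : forall c : R, D (fun _ => c))
    (HQ : coherent1 D Q) :
  (* P(Y) = p_Y does not depend on the representation of Y *)
  (forall (Y : Omega -> R) (n m : nat) (x : 'I_n -> Omega -> R) (a : 'I_n -> R)
          (y : 'I_m -> Omega -> R) (b : 'I_m -> R),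
      lin_rep D Q x a Y -> lin_rep D Q y b Y -> rep_val Q x a = rep_val Q y b) /\
  (* the prevision so defined is a coherent_1 extension of Q to L *)
  (forall P : (Omega -> R) -> \bar R,
      (forall (Y : Omega -> R) (n : nat) (x : 'I_n -> Omega -> R) (a : 'I_n -> R),
          lin_rep D Q x a Y -> P Y = rep_val Q x a) ->
      coherent1 (linL D Q) P /\ (forall X, D X -> P X = Q X)) /\
  (* and it is the unique coherent_1 extension of Q to L *)
  (forall P' : (Omega -> R) -> \bar R,
      coherent1 (linL D Q) P' -> (forall X, D X -> P' X = Q X) ->
      forall (Y : Omega -> R) (n : nat) (x : 'I_n -> Omega -> R) (a : 'I_n -> R),
        lin_rep D Q x a Y -> P' Y = rep_val Q x a).
Proof.
have Hhalf := @half R Omega D Q HOmega Hconst HQ.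
split; [|split].
- move=> Y n m x a y b r1 r2; apply: le_anti.
  by rewrite (Hhalf _ _ _ _ _ _ _ r1 r2) (Hhalf _ _ _ _ _ _ _ r2 r1).
- move=> P HP; split; last first.
    by move=> X DX; rewrite (HP _ _ _ _ (@rep1 _ _ _ Q _ DX)) rep_val1.
move=> N Y be c _ HY Hpos Hneg Hfin.
  have : forall i, exists r : {k : nat & (('I_k -> Omega -> R) * ('I_k -> R))%type},
      lin_rep D Q (tagged r).1 (tagged r).2 (Y i).
    move=> i; have [k [x [a r]]] := HY i.
    by exists (Tagged (fun k => (('I_k -> Omega -> R) * ('I_k -> R))%type) (x, a)).
  case/choice => r Hr.
  pose nn i := tag (r i).
  pose X i : 'I_(nn i) -> Omega -> R := (tagged (r i)).1.
  pose A i : 'I_(nn i) -> R := (tagged (r i)).2.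
  have HPY i : P (Y i) = rep_val Q (X i) (A i) := HP _ _ _ _ (Hr i).
  rewrite leNgt; apply/negP => Hlt.
  have Hub : forall w, ((\sum_i be i * (Y i w - c i))%:E <=
     ereal_sup (range (fun w => (\sum_i be i * (Y i w - c i))%:E)))%E.
    by move=> w; apply: ereal_sup_ubound; exists w.
  case: HOmega => w0.
  move: (ereal_sup _) Hub Hlt => s Hub Hlt.
  have [sr [esr srneg]] : exists sr, s = sr%:E /\ sr < 0.
    move: Hub Hlt; case: s => [sr||] Hub Hlt.
    - by exists sr; split => //; rewrite -lte_fin.
    - by [].
    - by have := Hub w0; rewrite leeNy_eq.
  have Hsr w : \sum_i be i * (Y i w - c i) <= sr by rewrite -lee_fin -esr.
  pose T := {i : 'I_N & 'I_(nn i)}.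
  pose z (p : T) := X (tag p) (tagged p).
  pose al (p : T) := be (tag p) * A (tag p) (tagged p).
  have sg : forall i j, (Q (X i j) = +oo%E -> 0 <= be i * A i j) /\
                        (Q (X i j) = -oo%E -> be i * A i j <= 0).
    move=> i j; have [DX YX wd] := Hr i.
    move: (HPY i) (Hpos i) (Hneg i); case: (P (Y i)) => [q||] e hp hn.
    - have : rep_val Q (X i) (A i) \is a fin_num by rewrite -e.
      move=> /sum_fin_numP tf; have {}tf := tf j (mem_index_enum j) isT.
      by split => h; rewrite (@E1 _ _ _ tf) ?mulr0 // h.
    - have b0 := hp erefl.
      have : rep_val Q (X i) (A i) != -oo%E by rewrite -e.
      move=> /sumNy /(_ j) nj; split => h; move: nj; rewrite h.
        by move/E2 => ?; apply: mulr_ge0.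
      by move/E3 => ?; apply: mulr_ge0_le0.
    - have b0 := hn erefl.
      have : rep_val Q (X i) (A i) != +oo%E by rewrite -e.
      move=> /(@sumy _ _ _ wd) /(_ j) nj; split => h; move: nj; rewrite h.
        by move/E4 => ?; apply: mulr_le0.
      by move/E5 => ?; apply: mulr_le0_ge0.
  have h1 : forall p, D (z p) by move=> [i j]; have [DX _ _] := Hr i; exact: DX.
  have h2 : forall p, Q (z p) = +oo%E -> 0 <= al p by move=> [i j]; case: (sg i j).
  have h3 : forall p, Q (z p) = -oo%E -> al p <= 0 by move=> [i j]; case: (sg i j).
  have h4 : forall w, \sum_p al p * z p w <= \sum_i be i * c i + sr.
    move=> w.
    rewrite (@sigsum R _ _ (fun i j => be i * A i j * X i j w)).
    have := Hsr w; under eq_bigr do rewrite mulrBr; rewrite sumrB.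
    have -> : \sum_i be i * Y i w = \sum_i \sum_(j < nn i) be i * A i j * X i j w.
      apply: eq_bigr => i _; have [_ YX _] := Hr i.
      rewrite (congr1 (fun f => f w) YX) /= mulr_sumr.
      by apply: eq_bigr => j _; rewrite mulrA.
    lra.
  have [fin le] := @L R Omega D Q (inhabits w0) Hconst HQ T z al _ h1 h2 h3 h4.
  move: le.
  rewrite (@sigsum R _ _ (fun i j => fine ((be i * A i j)%:E * Q (X i j))%E)).
  have -> : \sum_i \sum_(j < nn i) fine ((be i * A i j)%:E * Q (X i j))%E = \sum_i be i * c i.
    apply: eq_bigr => i _.
    case: (eqVneq (be i) 0) => b0.
      by rewrite b0 mul0r big1 // => j _; rewrite mul0r mul0e.
    have tf j : ((A i j)%:E * Q (X i j))%E \is a fin_num.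
      have := fin (Tagged (fun i => 'I_(nn i)) j); rewrite /al /z /= EFinM -muleA => h.
      apply/negPn/negP => nf; by move: b0; rewrite (@E1 _ _ _ h nf) eqxx.
    have -> : c i = \sum_(j < nn i) fine ((A i j)%:E * Q (X i j))%E.
      have := Hfin i; rewrite HPY /rep_val -EFin_sum_fine; last by move=> j _; exact: tf.
      by move=> /(_ isT) [].
    rewrite mulr_sumr; apply: eq_bigr => j _.
    by rewrite EFinM -muleA -(fineK (tf j)) -EFinM.
  lra.
- move=> P' HP'1 HP'2 Y n x a r.
  have Lc : forall c, linL D Q (fun _ => c).
    by move=> c; exists 1%N, (fun _ => fun _ => c), (fun _ => 1); apply: rep1.
  have LD : forall X, D X -> linL D Q X.
    by move=> X DX; exists 1%N, (fun _ => X), (fun _ => 1); apply: rep1.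
  have LY : linL D Q Y by exists n, x, a.
  have r1 := @rep1 _ _ _ P' _ LY.
  have r2 : lin_rep (linL D Q) P' x a Y.
    case: r => Dx Yx wd; split => //; first by move=> j; apply: LD.
    have -> : (fun j => ((a j)%:E * P' (x j))%E) = (fun j => ((a j)%:E * Q (x j))%E).
      by apply: funext => j; rewrite HP'2.
    exact: wd.
  have h := @half R Omega (linL D Q) P' HOmega Lc HP'1.
  have e : rep_val P' x a = rep_val Q x a.
    by apply: eq_bigr => j _; rewrite HP'2 //; case: r.
  rewrite -e -(@rep_val1 _ _ P' Y); apply: le_anti.
  by rewrite (h _ _ _ _ _ _ _ r1 r2) (h _ _ _ _ _ _ _ r2 r1).
Qed.
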